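(* Let $S$ be a finite set of possibly partial distributions all with total mass $\textsc{Mass}(S)$. Then $$\int_0^{\textsc{Mass}(S)}\log_2\!\left(\frac{1}{\textsc{Profile}_S(x)}\right)dx=\int_0^1\frac{\textsc{Inv-Prof}_S(y)}{y\ln 2}\,dy.$$
   Context: A possibly partial distribution $p$ is a finite vector of nonnegative reals sorted non-increasingly with total mass $\textsc{Mass}(p)\le 1$. $\textsc{Sketch}_p(x)=p(i)$ for $x\in(\sum_{j>i}p(j),\sum_{j\ge i}p(j)]$, and $\textsc{Profile}_S(x)=\min_{p\in S}\textsc{Sketch}_p(x)$ for $x\in(0,\textsc{Mass}(S)]$. The inverse sketch is $\textsc{Inv-Sketch}_p(y)=\sum_j p(j)\,[p(j)\le y]$ for $y\in[0,1]$, and the inverse profile is $\textsc{Inv-Prof}_S(y)=\max_{p\in S}\textsc{Inv-Sketch}_p(y)$. *)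

(* Defs.v *)
From HB Require Import structures.
From mathcomp Require Import all_boot all_order all_algebra.
From mathcomp Require Import all_classical all_reals all_analysis.
Set Implicit Arguments. Unset Strict Implicit. Unset Printing Implicit Defensive.
Import Order.TTheory GRing.Theory Num.Theory.
Local Open Scope ring_scope.

Section Defs.
Variable R : realType.

(* A possibly partial distribution: finite vector (seq, index 0 = p(1))
   of nonnegative reals sorted non-increasingly with total mass <= 1. *)
Definition mass (p : seq R) : R := \sum_(a <- p) a.

Definition is_pdist (p : seq R) : bool :=
  all (fun a => 0 <= a) p && sorted (fun a b => b <= a) p && (mass p <= 1).

Definition tail_gt (p : seq R) (i : nat) : R := \sum_(a <- drop i.+1 p) a.
Definition tail_ge (p : seq R) (i : nat) : R := \sum_(a <- drop i p) a.

(* Sketch_p(x) = p(i) for x in (sum_{j>i} p(j), sum_{j>=i} p(j)];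
   these intervals are disjoint, so this is written as an indicator sum
   (value 0 outside (0, Mass p]). *)
Definition sketch (p : seq R) (x : R) : R :=
  \sum_(i < size p)
     if (tail_gt p i < x) && (x <= tail_ge p i) then nth 0 p i else 0.

Definition profile (S : seq (seq R)) (x : R) : R :=
  match S with
  | [::] => 0
  | p :: S' => foldr (fun q m => Num.min (sketch q x) m) (sketch p x) S'
  end.

Definition inv_sketch (p : seq R) (y : R) : R :=
  \sum_(a <- p | a <= y) a.

(* Inv-Prof_S(y) = max_{p in S} Inv-Sketch_p(y)  (inv_sketch >= 0, so 0 is
   a neutral starting value for nonempty S) *)
Definition inv_prof (S : seq (seq R)) (y : R) : R :=
  \big[Num.max/0]_(p <- S) inv_sketch p y.

Definition log2 (z : R) : R := ln z / ln 2.

End Defs.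

(* Main.v *)
Require Import Defs.
From HB Require Import structures.
From mathcomp Require Import all_boot all_order all_algebra.
From mathcomp Require Import all_classical all_reals all_analysis.
From mathcomp Require Import measurable_realfun.
Import Order.TTheory GRing.Theory Num.Theory.
Local Open Scope ring_scope.
Local Open Scope classical_set_scope.
Import numFieldNormedType.Exports.
Lemma mass_cons (R : realType) (a : R) p : mass (a :: p) = a + mass p.
Proof. by rewrite /mass big_cons. Qed.

Lemma sketch_cons (R : realType) (a : R) p x :
  sketch (a :: p) x = (if (mass p < x) && (x <= a + mass p) then a else 0) + sketch p x.
Proof.
rewrite /sketch /= big_ord_recl /=; congr (_ + _).
by rewrite /tail_gt /tail_ge /= drop0 big_cons.
Qed.

Lemma inv_sketch_cons (R : realType) (a : R) p y :
  inv_sketch (a :: p) y = (if a <= y then a else 0) + inv_sketch p y.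
Proof. by rewrite /inv_sketch big_cons; case: ifP; rewrite ?add0r. Qed.

Lemma mass_ge0 (R : realType) (p : seq R) : all (fun a => 0 <= a) p -> 0 <= mass p.
Proof.
elim: p => [|a p IH] /=; first by rewrite /mass big_nil.
by case/andP => a0 /IH h; rewrite mass_cons addr_ge0.
Qed.

Lemma sketch_out (R : realType) (p : seq R) x :
  all (fun a => 0 <= a) p -> mass p < x -> sketch p x = 0.
Proof.
elim: p => [|a p IH] /=; first by rewrite /sketch big_ord0.
case/andP => a0 hp hx; rewrite sketch_cons IH //; last first.
  by rewrite mass_cons in hx; apply: le_lt_trans hx; rewrite lerDr.
by rewrite mass_cons ltNge in hx; rewrite (negbTE hx) andbF addr0.
Qed.

Lemma inv_sketch_le (R : realType) (p : seq R) y :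
  all (fun a => 0 <= a) p -> inv_sketch p y <= mass p.
Proof.
elim: p => [|a p IH] /=; first by rewrite /inv_sketch /mass !big_nil.
case/andP => a0 hp; rewrite inv_sketch_cons mass_cons lerD ?IH //.
by case: ifP.
Qed.

Lemma inv_sketch_all (R : realType) (p : seq R) y :
  all (fun a => a <= y) p -> inv_sketch p y = mass p.
Proof.
elim: p => [|a p IH] /=; first by rewrite /inv_sketch /mass !big_nil.
by case/andP => ay hp; rewrite inv_sketch_cons mass_cons ay IH.
Qed.

Lemma inv_sketch_ge0 (R : realType) (p : seq R) y :
  all (fun a => 0 <= a) p -> 0 <= inv_sketch p y.
Proof.
elim: p => [|a p IH] /=; first by rewrite /inv_sketch big_nil.
case/andP => a0 hp; rewrite inv_sketch_cons addr_ge0 ?IH //.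
by case: ifP.
Qed.

Lemma inv_sketch_mono (R : realType) (p : seq R) y y' :
  all (fun a => 0 <= a) p -> y <= y' -> inv_sketch p y <= inv_sketch p y'.
Proof.
move=> + yy'; elim: p => [|a p IH] /=; first by rewrite /inv_sketch !big_nil.
case/andP => a0 hp; rewrite !inv_sketch_cons lerD ?IH //.
case: ifP => ay; first by rewrite (le_trans ay yy').
by case: ifP.
Qed.

Lemma inv_sketch0 (R : realType) (p : seq R) :
  all (fun a => 0 <= a) p -> inv_sketch p 0 = 0.
Proof.
elim: p => [|a p IH] /=; first by rewrite /inv_sketch big_nil.
case/andP => a0 hp; rewrite inv_sketch_cons IH // addr0.
by case: ifP => // a0'; apply/eqP; rewrite eq_le a0 a0'.
Qed.

Lemma sketch_le (R : realType) (p : seq R) x y :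
  all (fun a => 0 <= a) p -> sorted (fun a b => b <= a) p ->
  0 < x -> x <= mass p ->
  (sketch p x <= y) = (x <= inv_sketch p y).
Proof.
elim: p => [|a p IH] /=.
  by move=> _ _ x0 xm; rewrite /mass big_nil in xm; have := lt_le_trans x0 xm; rewrite ltxx.
case/andP => a0 hp hs x0; rewrite mass_cons => xm.
have hpa : all (fun b => b <= a) p.
  have := order_path_min (leT := fun a b : R => b <= a) _ hs; apply.
  by move=> u v w h1 h2; apply: le_trans h2 h1.
have hsp : sorted (fun a b : R => b <= a) p by apply: path_sorted hs.
rewrite sketch_cons inv_sketch_cons.
have [xmp|mpx] := leP x (mass p).
  rewrite /= add0r IH //.
  case: ifP => ay; last by rewrite add0r.
  rewrite inv_sketch_all; last first.
    by apply/allP => b /(allP hpa) ba; apply: le_trans ba ay.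
  by rewrite xmp (le_trans xmp) // lerDr.
rewrite xm /= sketch_out // addr0.
case: ifP => ay.
  rewrite inv_sketch_all //; last by apply/allP => b /(allP hpa) ba; apply: le_trans ba ay.
apply/esym/negbTE; rewrite add0r -ltNge.
exact: le_lt_trans (inv_sketch_le _ _ y hp) mpx.
Qed.

Lemma profile_le (R : realType) (p : seq R) S' x y :
  (profile (p :: S') x <= y) = has (fun q => sketch q x <= y) (p :: S').
Proof.
rewrite /=; elim: S' => [|q S' IH] /=; first by rewrite orbF.
by rewrite ge_min IH orbCA.
Qed.

Lemma inv_prof_ge (R : realType) (S : seq (seq R)) x y : 0 < x ->
  (x <= inv_prof S y) = has (fun q => x <= inv_sketch q y) S.
Proof.
move=> x0; rewrite /inv_prof; elim: S => [|q S IH] /=.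
  by rewrite big_nil leNgt x0.
by rewrite big_cons le_max IH.
Qed.

Lemma pdist_all (R : realType) (p : seq R) : is_pdist p -> all (fun a => 0 <= a) p.
Proof. by case/andP => /andP[]. Qed.

Lemma pdist_sorted (R : realType) (p : seq R) : is_pdist p -> sorted (fun a b => b <= a) p.
Proof. by case/andP => /andP[]. Qed.

Lemma pdist_mass (R : realType) (p : seq R) : is_pdist p -> mass p <= 1.
Proof. by case/andP. Qed.

Lemma key_equiv (R : realType) (S : seq (seq R)) (M x y : R) :
  S != [::] -> (forall p, p \in S -> is_pdist p) -> (forall p, p \in S -> mass p = M) ->
  0 < x -> x <= M -> (profile S x <= y) = (x <= inv_prof S y).
Proof.
case: S => // p S' _ hd hM x0 xM.
rewrite profile_le inv_prof_ge //; apply: eq_in_has => q qS.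
have hq := hd q qS.
by apply: sketch_le; rewrite ?hM //; [apply: pdist_all | apply: pdist_sorted].
Qed.

Lemma inv_prof_le (R : realType) (S : seq (seq R)) (M y : R) :
  (forall p, p \in S -> is_pdist p) -> (forall p, p \in S -> mass p = M) -> 0 <= M ->
  inv_prof S y <= M.
Proof.
move=> + + M0; rewrite /inv_prof; elim: S => [|q S IH] hd hM; first by rewrite big_nil.
rewrite big_cons ge_max; apply/andP; split.
  rewrite -(hM q (mem_head _ _)); apply: inv_sketch_le; apply: pdist_all.
  exact: hd (mem_head _ _).
by apply: IH => r rS; [apply: hd | apply: hM]; rewrite in_cons rS orbT.
Qed.

Lemma inv_prof_ge0 (R : realType) (S : seq (seq R)) y : 0 <= inv_prof S y.
Proof.
rewrite /inv_prof; elim: S => [|q S IH]; first by rewrite big_nil.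
by rewrite big_cons le_max IH orbT.
Qed.

Lemma inv_prof_mono (R : realType) (S : seq (seq R)) y y' :
  (forall p, p \in S -> is_pdist p) -> y <= y' -> inv_prof S y <= inv_prof S y'.
Proof.
move=> + yy'; rewrite /inv_prof; elim: S => [|q S IH] hd; first by rewrite !big_nil.
rewrite !big_cons ge_max !le_max.
rewrite (inv_sketch_mono _ _ _ _ (pdist_all _ _ (hd q (mem_head _ _))) yy') IH //.
  by rewrite orbT.
by move=> r rS; apply: hd; rewrite in_cons rS orbT.
Qed.

Lemma inv_prof0 (R : realType) (S : seq (seq R)) :
  (forall p, p \in S -> is_pdist p) -> inv_prof S 0 = 0.
Proof.
rewrite /inv_prof; elim: S => [|q S IH] hd; first by rewrite big_nil.
rewrite big_cons inv_sketch0 ?IH ?maxxx //.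
  by move=> r rS; apply: hd; rewrite in_cons rS orbT.
exact: pdist_all _ _ (hd q (mem_head _ _)).
Qed.

Lemma elem_le_mass (R : realType) (p : seq R) :
  all (fun a => 0 <= a) p -> all (fun a => a <= mass p) p.
Proof.
elim: p => [|a p IH] //= /andP[a0 hp]; rewrite mass_cons lerDl mass_ge0 //=.
apply/allP => b /(allP (IH hp)) hb; apply: le_trans hb _; rewrite lerDr a0 //.
Qed.

Lemma profile_pos (R : realType) (S : seq (seq R)) (M x : R) :
  S != [::] -> (forall p, p \in S -> is_pdist p) -> (forall p, p \in S -> mass p = M) ->
  0 < x -> x <= M -> 0 < profile S x <= 1.
Proof.
move=> hS hd hM x0 xM; apply/andP; split.
  by rewrite ltNge (key_equiv _ _ _ _ _ hS hd hM x0 xM) inv_prof0 // -ltNge.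
rewrite (key_equiv _ _ _ _ _ hS hd hM x0 xM) inv_prof_ge //.
case: S hS hd hM => // p S' _ hd hM /=; apply/orP; left.
have hp := hd p (mem_head _ _).
rewrite inv_sketch_all ?hM ?mem_head //.
apply/allP => b /(allP (elem_le_mass _ _ (pdist_all _ _ hp))) hb.
exact: le_trans hb (pdist_mass _ _ hp).
Qed.

Lemma ln2_gt0 (R : realType) : (0 < ln (2 : R))%R.
Proof. by apply: ln_gt0; rewrite ltr1n. Qed.

Lemma derivable_f (R : realType) (y : R) : (0 < y)%R ->
  derivable (fun y : R => (y * ln 2)^-1)%R y 1.
Proof.
move=> y0; apply: (derivableV (f := fun y : R => (y * ln 2)%R)).
  by rewrite mulf_neq0 // ?gt_eqF // ln2_gt0.
have := @derivableM R _ id (cst (ln (2:R))) y 1%R (@derivable_id R _ y 1%R) (derivable_cst _ y 1%R).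
by [].
Qed.

Lemma is_derive_F (R : realType) (y : R) : (0 < y)%R ->
  is_derive y 1 ((ln (2:R))^-1 \*: (@ln R)) ((ln (2:R))^-1 *: y^-1)%R.
Proof. by move=> y0; apply: is_deriveZ; apply: is_derive1_ln. Qed.

Lemma int_inv (R : realType) (P : R) : (0 < P <= 1)%R ->
  (\int[(@lebesgue_measure R)]_(y in `[P, 1%R]) ((y * ln 2)^-1)%:E = (log2 P^-1)%:E)%E.
Proof.
case/andP => P0 P1.
have [->|Plt1] := eqVneq P 1%R.
  by rewrite set_itv1 integral_set1 /log2 invr1 ln1 mul0r.
have P1' : (P < 1)%R by rewrite lt_neqAle Plt1 P1.
rewrite (@continuous_FTC2 R (fun y : R => (y * ln 2)^-1)%R ((ln (2:R))^-1 \*: (@ln R))) //.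
- rewrite /= /log2 lnV ?posrE // ln1 -EFinB; congr EFin.
  by rewrite /GRing.scale /= mulr0 sub0r mulrC mulNr.
- apply: derivable_within_continuous => y; rewrite in_itv /= => /andP[Py _].
  exact: derivable_f _ _ (lt_le_trans P0 Py).
- have hd : forall y : R, (0 < y)%R -> derivable ((ln (2:R))^-1 \*: (@ln R)) y 1.
    by move=> y y0; have := is_derive_F _ _ y0; case.
  have hc : forall y : R, (0 < y)%R -> ((ln (2:R))^-1 \*: (@ln R)) x @[x --> y] --> ((ln (2:R))^-1 \*: (@ln R)) y.
    by move=> y y0; apply/differentiable_continuous/derivable1_diffP/hd.
  split.
  + move=> y; rewrite in_itv /= => /andP[Py _]; exact: hd (lt_trans P0 Py).
  + exact/cvg_at_right_filter/hc.
  + exact/cvg_at_left_filter/hc.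
- move=> y; rewrite in_itv /= => /andP[Py _].
  have y0 : (0 < y)%R by exact: lt_trans P0 Py.
  have hdF := is_derive_F _ _ y0; rewrite derive1E derive_val.
  by rewrite /GRing.scale /= invfM mulrC.
Qed.
Lemma measurable_g (R : realType) :
  measurable_fun setT ((fun y : R => (y * ln 2)^-1)%R \_ `]0%R, +oo[).
Proof.
have := (measurable_restrictT (fun y : R => (y * ln 2)^-1)%R (measurable_itv `]0%R, +oo[%R)).
move=> [+ _]; apply.
apply: open_continuous_measurable_fun; first exact: interval_open.
move=> y; rewrite inE /= in_itv /= andbT => y0.
exact/differentiable_continuous/derivable1_diffP/derivable_f.
Qed.

Theorem lemma3 (R : realType) (S : seq (seq R)) (M : R) :
  S != [::] ->
  (forall p, p \in S -> is_pdist p) ->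
  (forall p, p \in S -> mass p = M) ->
  (\int[(@lebesgue_measure R)]_(x in [set` `]0, M]%R]) (log2 (profile S x)^-1)%:E =
   \int[(@lebesgue_measure R)]_(y in [set` `]0, 1]%R]) (inv_prof S y / (y * ln 2))%:E)%E.
Proof.
move=> hS hd hM.
have M0 : (0 <= M)%R.
  case: S hS hd hM => // p S' _ hd hM; rewrite -(hM p (mem_head _ _)).
  exact: (mass_ge0 _ _ (pdist_all _ _ (hd p (mem_head _ _)))).
set E := inv_prof S.
have hEM : forall y, (E y <= M)%R by move=> y; exact: (inv_prof_le _ _ _ _ hd hM M0).
have hE0 : forall y, (0 <= E y)%R by move=> y; exact: inv_prof_ge0.
have mE : measurable_fun setT E.
  by apply: nondecreasing_measurable => // y y' yy'; exact: (inv_prof_mono _ _ _ _ hd yy').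
pose A : set (R * R) :=
  ([set` `]0%R, M]%R] `*` [set` `]0%R, 1%R]%R]) `&` [set z | (z.1 <= E z.2)%R].
have mA : measurable A.
  apply: measurableI; first by apply: measurableX; exact: measurable_itv.
  have := measurable_fun_ler (@measurable_fst _ _ R R) (measurableT_comp mE (@measurable_snd _ _ R R)).
  move=> /(_ measurableT [set true]) /(_ I); rewrite setTI.
  by congr measurable; apply/seteqP; split => z /=.
have inA : forall x y, ((x, y) \in A) = [&& (0 < x <= M)%R, (0 < y <= 1)%R & (x <= E y)%R].
  move=> x y; rewrite /A; apply/idP/idP.
    by rewrite inE => -[[/= h1 h2] h3]; rewrite !in_itv /= in h1 h2; rewrite h1 h2 h3.
  case/and3P => h1 h2 h3; rewrite inE; split; last by [].
  by split; rewrite /= in_itv /=.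
pose F (z : R * R) := ((\1_A z) * (z.2 * ln 2)^-1)%:E.
have F0 : forall z, (0 <= F z)%E.
  case=> x y; rewrite /F lee_fin indicE.
  case: (boolP ((x, y) \in A)) => h; last by rewrite mul0r.
  rewrite mul1r; move: h; rewrite inA => /and3P[_ /andP[y0 _] _].
  by rewrite invr_ge0 mulr_ge0 // ?ltW // ln2_gt0.
have mF : measurable_fun setT F.
  rewrite /F; apply/measurable_EFinP.
  have -> : (fun z : R * R => \1_A z * (z.2 * ln 2)^-1)%R =
     (fun z : R * R => \1_A z * ((fun y : R => (y * ln 2)^-1)%R \_ `]0%R, +oo[) z.2)%R.
    apply/funext => -[x y]; rewrite indicE patchE.
    case: (boolP ((x, y) \in A)) => h; last by rewrite !mul0r.
    move: h; rewrite inA => /and3P[_ /andP[y0 _] _].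
    by rewrite ifT // inE /= in_itv /= andbT.
  apply: measurable_funM; first exact: measurable_indic.
  exact: measurableT_comp (measurable_g R) measurable_snd.
have FT := fubini_tonelli (m1 := @lebesgue_measure R) (m2 := @lebesgue_measure R) F mF F0.
have LHS : (\int[(@lebesgue_measure R)]_(x in [set` `]0, M]%R]) (log2 (profile S x)^-1)%:E =
   \int[(@lebesgue_measure R)]_x \int[(@lebesgue_measure R)]_y F (x, y))%E.
  rewrite integral_mkcond; apply: eq_integral => x _; rewrite patchE.
  case: (boolP (x \in [set` `]0, M]%R])) => hx.
    have /andP[x0 xM] : (0 < x <= M)%R by move: hx; rewrite mem_setE /= in_itv.
    have /andP[P0 P1] := profile_pos _ _ _ _ hS hd hM x0 xM.
    rewrite -int_inv ?P0 ?P1 // integral_mkcond; apply: eq_integral => y _.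
    rewrite patchE /F indicE inA x0 xM /= -(key_equiv _ _ _ _ _ hS hd hM x0 xM).
    rewrite mem_setE /= in_itv /=.
    case: (boolP (profile S x <= y)%R) => Py /=; last by rewrite andbF mul0r.
    have y0 : (0 < y)%R by exact: lt_le_trans P0 Py.
    rewrite y0 /=; case: (y <= 1)%R => /=; by rewrite ?mul1r ?mul0r.
  rewrite (eq_integral (cst 0%E)) ?integral0 // => y _.
  have hx' : ~~ (0 < x <= M)%R by move: hx; rewrite mem_setE /= in_itv.
  by rewrite /F indicE inA (negbTE hx') /= mul0r.
have RHS : (\int[(@lebesgue_measure R)]_(y in [set` `]0, 1]%R]) (inv_prof S y / (y * ln 2))%:E =
   \int[(@lebesgue_measure R)]_y \int[(@lebesgue_measure R)]_x F (x, y))%E.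
  rewrite integral_mkcond; apply: eq_integral => y _; rewrite patchE.
  case: (boolP (y \in [set` `]0, 1]%R])) => hy.
    have /andP[y0 y1] : (0 < y <= 1)%R by move: hy; rewrite mem_setE /= in_itv.
    transitivity (\int[(@lebesgue_measure R)]_(x in [set` `]0, E y]%R]) (cst ((y * ln 2)^-1)%:E) x)%E.
      rewrite integral_cst //.
      have := lebesgue_measure_itv `]0%R, E y]%R; rewrite /= => ->.
      case: ifP => h.
        by rewrite -EFinB subr0 -EFinM mulrC.
      rewrite lte_fin in h.
      have Ey0 : E y = 0%R by apply/eqP; rewrite eq_le hE0 andbT leNgt h.
      by rewrite mule0 /E -/(E y) Ey0 mul0r.
    rewrite integral_mkcond; apply: eq_integral => x _.
    rewrite patchE /F indicE inA y0 y1 /= mem_setE /= in_itv /=.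
    case: (boolP (0 < x)%R) => x0 /=; last by rewrite mul0r.
    case: (boolP (x <= E y)%R) => xE /=; last by rewrite andbF mul0r.
    by rewrite (le_trans xE (hEM y)) mul1r.
  rewrite (eq_integral (cst 0%E)) ?integral0 // => x _.
  have hy' : ~~ (0 < y <= 1)%R by move: hy; rewrite mem_setE /= in_itv.
  by rewrite /F indicE inA (negbTE hy') /= andbF mul0r.
by rewrite LHS RHS.
Qed.
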